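(* For every integer $m \geq 3$, $\gamma_{b,2}(P_m \square C_4) = 4\left\lfloor \frac{m}{6} \right\rfloor + c$, where $c \in \{0,1\}$ if $m \equiv 0 \pmod 6$; $c = 2$ if $m \equiv 1$ or $2 \pmod 6$; $c = 3$ if $m \equiv 3 \pmod 6$; $c \in \{3,4\}$ if $m \equiv 4 \pmod 6$; and $c = 4$ if $m \equiv 5 \pmod 6$.
   Context: For a graph $G$, a $2$-limited broadcast is a function $f: V(G) \to \{0,1,2\}$. A vertex $u$ hears the broadcast from $v$ if $f(v) > 0$ and $d(u,v) \leq f(v)$, where $d$ is the distance in $G$. The broadcast $f$ is dominating if every vertex of $G$ hears the broadcast from some vertex. The cost of $f$ is $\sum_{v \in V(G)} f(v)$. The $2$-limited broadcast domination number $\gamma_{b,2}(G)$ is the minimum cost of a $2$-limited dominating broadcast on $G$. $C_n$ denotes the cycle on $n$ vertices, $P_m$ the path on $m$ vertices, and $\square$ the Cartesian product of graphs. *)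

(* Defs.v *)
From mathcomp Require Import all_boot.
Set Implicit Arguments. Unset Strict Implicit. Unset Printing Implicit Defensive.

(* within e k u v  <=>  there is a walk of length <= k from u to v,
   i.e. the graph distance d(u,v) is at most k. *)
Fixpoint within (T : finType) (e : rel T) (k : nat) (u v : T) : bool :=
  match k with
  | 0 => u == v
  | k'.+1 => within e k' u v || [exists w, within e k' u w && e w v]
  end.

Definition path_graph (m : nat) : rel 'I_m :=
  fun i j => (i.+1 == j :> nat) || (j.+1 == i :> nat).

Definition cycle_graph (n : nat) : rel 'I_n :=
  fun i j => (i.+1 %% n == j :> nat) || (j.+1 %% n == i :> nat).

Definition cart_prod (T1 T2 : finType) (e1 : rel T1) (e2 : rel T2)
  : rel (T1 * T2) :=
  fun u v => ((u.1 == v.1) && e2 u.2 v.2) || (e1 u.1 v.1 && (u.2 == v.2)).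

Definition broadcast2 (T : finType) := {ffun T -> 'I_3}.

Definition hears (T : finType) (e : rel T) (f : broadcast2 T) (u v : T) : bool :=
  (0 < f v) && within e (f v) v u.

Definition dominating2 (T : finType) (e : rel T) (f : broadcast2 T) : bool :=
  [forall u, [exists v, hears e f u v]].

Definition cost2 (T : finType) (f : broadcast2 T) : nat := \sum_(v : T) (f v : nat).

(* gamma_{b,2}(G): minimum cost of a dominating 2-limited broadcast.
   The neutral element #|T| is harmless: the constant-1 broadcast is
   dominating and has cost #|T|. *)
Definition gamma_b2 (T : finType) (e : rel T) : nat :=
  \big[minn/#|T|]_(f : broadcast2 T | dominating2 e f) cost2 f.

Arguments path_graph m : clear implicits.
Arguments cycle_graph n : clear implicits.

(* Main.v *)
Require Import Defs.
From mathcomp Require Import all_boot.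
From mathcomp Require Import zify.

Definition distn (a b : nat) := (a - b) + (b - a).
Definition dc (a b : nat) := (a != b) + ((a + 2) %% 4 == b).
Definition close (m k : nat) (v u : 'I_m * 'I_4) :=
  distn v.1 u.1 + dc v.2 u.2 <= k.
Arguments close {m}.
Notation GG m := (cart_prod (path_graph m) (cycle_graph 4)).

Lemma within_close m k (v u : 'I_m * 'I_4) : within (GG m) k v u -> close k v u.
Proof.
case: v => a b; elim: k u => [|k IH] [x y] /=.
  move/eqP=> [<- <-]; rewrite /close /distn /dc /= eqxx /=.
  have := ltn_ord b; lia.
case/orP=> [/IH|/existsP [[wx wy] /andP [/IH hw he]]]; rewrite /close /=.
  rewrite /close /=; lia.
move: hw he; rewrite /close /cart_prod /path_graph /cycle_graph /= -!val_eqE /=.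
have := ltn_ord b; have := ltn_ord y; have := ltn_ord wy; rewrite /distn /dc; lia.
Qed.

Lemma close_within m k (v u : 'I_m * 'I_4) : close k v u -> within (GG m) k v u.
Proof.
case: v => a b; elim: k u => [|k IH] [x y] /=.
  rewrite /close /distn /dc /= => h; apply/eqP; congr pair; apply: val_inj => /=;
  have := ltn_ord b; have := ltn_ord y; lia.
case: (boolP (close k (a, b) (x, y))) => [/IH -> //|hn hc].
apply/orP; right; apply/existsP.
have hb := ltn_ord b; have hy := ltn_ord y; have hx := ltn_ord x; have ha := ltn_ord a.
move: hn hc; rewrite /close /= /distn => hn hc.
case: (eqVneq (x : nat) a) => hxa.
  have [hlt|hge] := ltnP (dc b ((y + 1) %% 4)) (dc b y).
    have hy' : (y + 1) %% 4 < 4 by rewrite ltn_mod.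
    exists (x, Ordinal hy'); rewrite IH /close /= ?/distn.
      by rewrite /cart_prod /path_graph /cycle_graph /= eqxx /= -!val_eqE /=; move: hy hy'; lia.
    move: hlt hn hc hb hy; rewrite /dc; lia.
  have hy' : (y + 3) %% 4 < 4 by rewrite ltn_mod.
  exists (x, Ordinal hy'); rewrite IH /close /= ?/distn.
    by rewrite /cart_prod /path_graph /cycle_graph /= eqxx /= -!val_eqE /=; move: hy hy'; lia.
  move: hge hn hc hb hy; rewrite /dc; lia.
pose x' := if x < a then x.+1 else x.-1.
have hx' : x' < m by rewrite /x'; case: ifP; lia.
exists (Ordinal hx', y); rewrite IH /close /= ?/distn.
  by rewrite /cart_prod /path_graph /cycle_graph /= eqxx /= !andbT /x' -!val_eqE /=; case: ifP; lia.
rewrite /x'; case: ifP; move: hn hc hxa; lia.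
Qed.

Lemma sum_pt m c a (F : nat -> nat) :
  \sum_(x < m) (x + c == a) * F x = ((c <= a) && (a - c < m)) * F (a - c).
Proof.
elim: m => [|m IH]; first by rewrite big_ord0 ltn0 andbF.
rewrite big_ord_recr /= IH.
case: (eqVneq (m + c) a) => [<-|ne].
  by rewrite addnK leq_addl ltnn ltnSn /= mul1n.
rewrite mul0n addn0; congr (nat_of_bool _ * _); move: ne; lia.
Qed.

Lemma sum_pt0 m a (F : nat -> nat) :
  \sum_(x < m) (x == a) * F x = (a < m) * F a.
Proof.
rewrite (eq_bigr (fun x : 'I_m => (x + 0 == a) * F x)); last by move=> x _; rewrite addn0.
by rewrite sum_pt subn0.
Qed.

Lemma sum_pt1 m c a :
  \sum_(x < m) (x + c == a) = ((c <= a) && (a - c < m)).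
Proof.
rewrite (eq_bigr (fun x : 'I_m => (x + c == a) * (fun _ => 1) x)); last by move=> x _; rewrite muln1.
by rewrite (sum_pt m c a (fun _ => 1)) muln1.
Qed.

Definition W m x := 9 + 4 * (x == 0) + 4 * (x.+1 == m) - (x == 2) - (x.+3 == m).

Lemma coefd s m (i x : 'I_m) (j : 'I_4) : \sum_(y < 4) close s (i, j) (x, y) =
   ((distn i x <= s) + 2 * (distn i x + 1 <= s) + (distn i x + 2 <= s))%N.
Proof.
rewrite !big_ord_recr big_ord0 /close /=.
case: j => [[|[|[|[|j]]]] hj] //=; rewrite /dc /=; set d := distn _ _; lia.
Qed.

Lemma coef2 m (i x : 'I_m) (j : 'I_4) : \sum_(y < 4) close 2 (i, j) (x, y) =
   ((x + 2 == i) + 3 * (x + 1 == i) + 4 * (x + 0 == i) + 3 * (x + 0 == i + 1) + (x + 0 == i + 2))%N.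
Proof. rewrite coefd /distn; lia. Qed.

Lemma coef1 m (i x : 'I_m) (j : 'I_4) : \sum_(y < 4) close 1 (i, j) (x, y) =
   ((x + 1 == i) + 3 * (x + 0 == i) + (x + 0 == i + 1))%N.
Proof. rewrite coefd /distn; lia. Qed.

Lemma sumhW (h : nat -> nat) m : 3 <= m ->
  \sum_(x < m) h x * W m x + h 2 + h (m - 3) =
  9 * \sum_(x < m) h x + 4 * h 0 + 4 * h (m - 1).
Proof.
move=> hm.
have pw x : h x * W m x + (x + 0 == 2) * h x + (x + 3 == m) * h x =
   9 * h x + 4 * ((x + 0 == 0) * h x) + 4 * ((x + 1 == m) * h x).
  rewrite /W !addn0 addn1 addn3.
  by case: eqP; case: eqP; case: eqP; case: eqP; move=> *; rewrite ?mul1n ?mul0n /=; lia.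
have E : \sum_(x < m) (h x * W m x + (x + 0 == 2) * h x + (x + 3 == m) * h x) =
  \sum_(x < m) (9 * h x + 4 * ((x + 0 == 0) * h x) + 4 * ((x + 1 == m) * h x)).
  by apply: eq_bigr => x _; exact: pw.
move: E; rewrite !big_split /= !big1_eq !sum_pt.
rewrite !subn0 /=.
have g1 : (0 < m) = true by lia.
have g2 : (2 < m) = true by lia.
have g3 : (m - 3 < m) = true by lia.
have g4 : (m - 1 < m) = true by lia.
rewrite g1 g2 g3 g4 /=.
rewrite !mul1n; lia.
Qed.

Definition h2 (i x : nat) :=
  ((x + 2 == i) + 3 * (x + 1 == i) + 4 * (x + 0 == i) + 3 * (x + 0 == i + 1) + (x + 0 == i + 2))%N.
Definition h1 (i x : nat) := ((x + 1 == i) + 3 * (x + 0 == i) + (x + 0 == i + 1))%N.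

Lemma sumh2 m i : \sum_(x < m) h2 i x =
  ((2 <= i) && (i - 2 < m)) + 3 * ((1 <= i) && (i - 1 < m)) + 4 * (i < m) + 3 * (i + 1 < m) + (i + 2 < m).
Proof.
rewrite /h2 !big_split /= ?big1_eq !sum_pt1 !subn0 /=; lia.
Qed.

Lemma sumh1 m i : \sum_(x < m) h1 i x =
  ((1 <= i) && (i - 1 < m)) + 3 * (i < m) + (i + 1 < m).
Proof.
rewrite /h1 !big_split /= ?big1_eq !sum_pt1 !subn0 /=; lia.
Qed.

Lemma L2 i : 4 * h2 i 0 <= 9 * ((i < 2) + 3 * (i < 1)) + h2 i 2.
Proof. rewrite /h2; lia. Qed.
Lemma h2q i q : h2 i (i + q) = (q == 0) * 4 + (q == 1) * 3 + (q == 2).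
Proof. rewrite /h2; lia. Qed.

Lemma R2 i m : i < m -> 4 * h2 i (m - 1) <= 9 * (3 * (m <= i + 1) + (m <= i + 2)) + h2 i (m - 3).
Proof.
move=> hi; have [q ->] : exists q, m = i + 1 + q by exists (m - i - 1); lia.
rewrite (_ : i + 1 + q - 1 = i + q); last by lia.
case: q => [|[|[|q]]].
- rewrite h2q /h2; lia.
- rewrite h2q /h2; lia.
- rewrite h2q (_ : i + 1 + 2 - 3 = i + 0); last by lia. rewrite h2q; lia.
- rewrite h2q (_ : i + 1 + q.+3 - 3 = i + (q.+1)); last by lia. rewrite h2q; lia.
Qed.
Lemma fin2 S a b c d m i : 2 < m -> i < m -> 
  4 * a <= 9 * ((i < 2) + 3 * (i < 1)) + b ->
  4 * c <= 9 * (3 * (m <= i + 1) + (m <= i + 2)) + d ->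
  S + b + d =
  9 *
  ((1 < i) && (i - 2 < m) + 3 * ((0 < i) && (i - 1 < m)) + 4 * (i < m) +
   3 * (i + 1 < m) + (i + 2 < m)) +
  4 * a + 4 * c -> S <= 108.
Proof. lia. Qed.

Lemma ball2 m (i : 'I_m) (j : 'I_4) : 3 <= m ->
  \sum_(u : 'I_m * 'I_4) (close 2 (i, j) u) * W m u.1 <= 108.
Proof.
move=> hm; have hi := ltn_ord i.
apply: (@leq_trans (\sum_(x < m) h2 i x * W m x)).
  rewrite -(pair_bigA _ (fun x y => (close 2 (i, j) (x, y)) * W m x)) /=.
  apply: leq_sum => x _; by rewrite -big_distrl /= coef2.
have E := sumhW (h2 i) m hm; rewrite sumh2 in E.
exact: (fin2 _ _ _ _ _ _ _ hm hi (L2 i) (R2 _ _ hi) E).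
Qed.

Lemma fin1 S a b c d m i : 2 < m -> i < m -> 
  4 * a + 4 * c <= 9 + 9 * (i < 1) + 9 * (m <= i + 1) ->
  S + b + d = 9 * ((0 < i) && (i - 1 < m) + 3 * (i < m) + (i + 1 < m)) + 4 * a + 4 * c -> S <= 54.
Proof. lia. Qed.

Lemma LR1 i m : i < m -> 2 < m -> 4 * h1 i 0 + 4 * h1 i (m - 1) <= 9 + 9 * (i < 1) + 9 * (m <= i + 1).
Proof. rewrite /h1; lia. Qed.

Lemma ball1 m (i : 'I_m) (j : 'I_4) : 3 <= m ->
  \sum_(u : 'I_m * 'I_4) (close 1 (i, j) u) * W m u.1 <= 54.
Proof.
move=> hm; have hi := ltn_ord i.
apply: (@leq_trans (\sum_(x < m) h1 i x * W m x)).
  rewrite -(pair_bigA _ (fun x y => (close 1 (i, j) (x, y)) * W m x)) /=.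
  apply: leq_sum => x _; by rewrite -big_distrl /= coef1.
have E := sumhW (h1 i) m hm; rewrite sumh1 in E.
exact: (fin1 _ _ _ _ _ _ _ hm hi (LR1 _ _ hi hm) E).
Qed.

Definition Pm m := (m %% 6 != 0) && (m %% 6 != 3).
Definition Rr (m : nat) : nat := 2 * (3 <= m %% 6).
Definition F (m x y : nat) : nat := 2 * ((x %% 6 == 2) && (y == 0)) + 2 * ((x %% 6 == 5) && (y == 2))
  + ((x == 0) && (y == 2)) + [&& x.+1 == m, y == Rr m & Pm m].

Lemma F_le2 m x y : 3 <= m -> F m x y <= 2.
Proof. rewrite /F /Pm /Rr; lia. Qed.

Ltac fin := split; rewrite /F /distn /dc /Pm /Rr /=; lia.

Lemma wit m x y : 3 <= m -> x < m -> y < 4 ->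
  exists a b, [/\ a < m, b < 4, 0 < F m a b & distn a x + dc b y <= F m a b].
Proof.
move=> hm hx hy.
have hr : x %% 6 < 6 by rewrite ltn_mod.
case Hr: (x %% 6) hr => [|[|[|[|[|[|r]]]]]] // _;
 case: y hy => [|[|[|[|y]]]] // _.
- case: (ltnP (x + 2) m) => h; [by exists (x + 2), 0; fin | by exists (m - 1), 0; fin].
- case: (posnP x) => h; [by exists 0, 2; fin | by exists (x - 1), 2; fin].
- case: (posnP x) => h; [by exists 0, 2; fin | by exists (x - 1), 2; fin].
- case: (posnP x) => h; [by exists 0, 2; fin | by exists (x - 1), 2; fin].
- case: (ltnP (x + 1) m) => h; [by exists (x + 1), 0; fin | by exists (m - 1), 0; fin].
- case: (ltnP (x + 1) m) => h; [by exists (x + 1), 0; fin | by exists (m - 1), 0; fin].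
- case: (ltnP x 2) => h; [by exists 0, 2; fin | by exists (x - 2), 2; fin].
- case: (ltnP (x + 1) m) => h; [by exists (x + 1), 0; fin | by exists (m - 1), 0; fin].
- by exists x, 0; fin.
- by exists x, 0; fin.
- by exists x, 0; fin.
- by exists x, 0; fin.
- by exists (x - 1), 0; fin.
- by exists (x - 1), 0; fin.
- case: (ltnP (x + 2) m) => h; [by exists (x + 2), 2; fin | by exists (m - 1), 2; fin].
- by exists (x - 1), 0; fin.
- by exists (x - 2), 0; fin.
- case: (ltnP (x + 1) m) => h; [by exists (x + 1), 2; fin | by exists (m - 1), 2; fin].
- case: (ltnP (x + 1) m) => h; [by exists (x + 1), 2; fin | by exists (m - 1), 2; fin].
- case: (ltnP (x + 1) m) => h; [by exists (x + 1), 2; fin | by exists (m - 1), 2; fin].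
- by exists x, 2; fin.
- by exists x, 2; fin.
- by exists x, 2; fin.
- by exists x, 2; fin.
Qed.


Lemma sumW m : 3 <= m -> \sum_(x < m) W m x = 9 * m + 6.
Proof.
move=> hm; have E := sumhW (fun _ => 1) m hm.
have e1 : \sum_(x < m) (fun _ => 1) x * W m x = \sum_(x < m) W m x
  by apply: eq_bigr => x _; rewrite mul1n.
have e2 : \sum_(x < m) (fun _ : nat => 1) x = m.
  by rewrite (sum1_card (fun _ : 'I_m => true)) card_ord.
rewrite e1 e2 in E; lia.
Qed.

Lemma lower m (f : broadcast2 ('I_m * 'I_4)%type) : 3 <= m -> dominating2 (GG m) f ->
  4 * (9 * m + 6) <= 54 * cost2 f.
Proof.
move=> hm hd.
have sW : \sum_(u : 'I_m * 'I_4) W m u.1 = 4 * (9 * m + 6).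
  rewrite -(pair_bigA _ (fun (x : 'I_m) (y : 'I_4) => W m x)) /=.
  rewrite (eq_bigr (fun x : 'I_m => 4 * W m x)); last first.
    by move=> x _; rewrite !big_ord_recr big_ord0 /=; lia.
  by rewrite -big_distrr /= sumW.
rewrite -sW.
apply: (@leq_trans (\sum_(u : 'I_m * 'I_4) \sum_(v : 'I_m * 'I_4) hears (GG m) f u v * W m u.1)).
  apply: leq_sum => u _.
  move/forallP: hd => /(_ u) /existsP [v hv].
  by rewrite (bigD1 v) //= hv mul1n leq_addr.
rewrite exchange_big /= /cost2 big_distrr /=.
apply: leq_sum => [[i j]] _.
rewrite /hears.
case: (f (i, j)) => [[|[|[|k]]] hk] //.
- by rewrite big1.
- rewrite muln1; apply: leq_trans _ (ball1 _ i j hm); apply: leq_sum => u _.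
  case hw: (within (GG m) 1 (i, j) u); last by rewrite andbF.
  by rewrite (within_close _ _ _ _ hw).
- rewrite (_ : 54 * 2 = 108) //; apply: leq_trans _ (ball2 _ i j hm); apply: leq_sum => u _.
  case hw: (within (GG m) 2 (i, j) u); last by rewrite andbF.
  by rewrite (within_close _ _ _ _ hw).
Qed.

Lemma gamma_lower m : 3 <= m -> 4 * (9 * m + 6) <= 54 * gamma_b2 (GG m).
Proof.
move=> hm; rewrite /gamma_b2.
apply: (big_ind (fun g => 4 * (9 * m + 6) <= 54 * g)).
- rewrite card_prod !card_ord; lia.
- move=> x y hx hy; lia.
- move=> f hf; exact: lower.
Qed.

Definition f0 m : broadcast2 ('I_m * 'I_4)%type := [ffun u : ('I_m * 'I_4)%type => inord (F m u.1 u.2)].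

Lemma f0E m u : 3 <= m -> (f0 m u : nat) = F m u.1 u.2.
Proof. by move=> hm; rewrite ffunE inordK // ltnS F_le2. Qed.

Lemma f0_dom m : 3 <= m -> dominating2 (GG m) (f0 m).
Proof.
move=> hm; apply/forallP => [[x y]]; apply/existsP.
have [a [b [ha hb hF hd]]] := wit m x y hm (ltn_ord x) (ltn_ord y).
exists (Ordinal ha, Ordinal hb); rewrite /hears f0E //=; rewrite hF /=.
by apply: close_within; rewrite /close /=.
Qed.

Lemma count6 m a : a < 6 -> \sum_(x < m) (x %% 6 == a) = (m + 5 - a) %/ 6.
Proof.
move=> ha; elim: m => [|m IH]; first by rewrite big_ord0; lia.
rewrite big_ord_recr /= IH; lia.
Qed.

Lemma cost_f0 m : 3 <= m -> cost2 (f0 m) = 2 * ((m + 3) %/ 6) + 2 * (m %/ 6) + 1 + Pm m.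
Proof.
move=> hm; rewrite /cost2.
rewrite (eq_bigr (fun p : ('I_m * 'I_4)%type => F m p.1 p.2)); last by move=> p _; rewrite f0E.
rewrite -(pair_bigA _ (fun (x : 'I_m) (y : 'I_4) => F m x y)) /=.
rewrite (eq_bigr (fun x : 'I_m => (x %% 6 == 2) * 2 + (x %% 6 == 5) * 2 + (x + 0 == 0)
                                   + (x + 1 == m) * Pm m)); last first.
  move=> x _; have hR : Rr m = 0 \/ Rr m = 2 by rewrite /Rr; lia.
  rewrite !big_ord_recr big_ord0 /= /F /=.
  by rewrite mulnb; case: hR => ->; lia.
rewrite !big_split -!big_distrl /= !count6 // !sum_pt1 /=.
have -> : (m - 1 < m) = true by lia.
rewrite /=; lia.
Qed.

Lemma bigmin_le (I : finType) (P : pred I) (G : I -> nat) x i0 : P i0 ->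
  \big[minn/x]_(i | P i) G i <= G i0.
Proof.
move=> Pi0; rewrite -big_filter.
have : i0 \in [seq i <- index_enum I | P i] by rewrite mem_filter Pi0 mem_index_enum.
elim: [seq i <- index_enum I | P i] => [//|j s IH]; rewrite big_cons inE => /orP [/eqP <-|/IH h].
  exact: geq_minl.
exact: leq_trans (geq_minr _ _) h.
Qed.

Lemma gamma_upper m : 3 <= m -> gamma_b2 (GG m) <= cost2 (f0 m).
Proof.
move=> hm; rewrite /gamma_b2; apply: bigmin_le; exact: f0_dom.
Qed.

Theorem corollary4p4 (m : nat) (hm : 3 <= m) :
  exists c : nat,
    gamma_b2 (cart_prod (path_graph m) (cycle_graph 4)) = 4 * (m %/ 6) + c /\
    (m %% 6 = 0 -> c = 0 \/ c = 1) /\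
    (m %% 6 = 1 \/ m %% 6 = 2 -> c = 2) /\
    (m %% 6 = 3 -> c = 3) /\
    (m %% 6 = 4 -> c = 3 \/ c = 4) /\
    (m %% 6 = 5 -> c = 4).
Proof.
have lo := gamma_lower m hm.
have up := gamma_upper m hm.
rewrite cost_f0 // /Pm in up.
move: (gamma_b2 _) lo up => g lo up.
exists (g - 4 * (m %/ 6)).
lia.
Qed.
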